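(* Let $(Q,\cdot)$ and $(Q,\ast)$ be right modular magmas on the same set $Q$, where $(Q,\cdot)$ has a left unit $e$ and $(Q,\ast)$ has a left unit $\overline{e}$. Then $(Q,\cdot,\ast)$ is a double magma, i.e. $(x\cdot y)\ast(z\cdot w)=(x\ast z)\cdot(y\ast w)$ for all $x,y,z,w\in Q$, if and only if there is an involutive automorphism $\alpha$ of $(Q,\ast)$ such that $x\ast y=\alpha x\cdot y$ for all $x,y\in Q$. In this case $\alpha x=(x\ast\overline{e})\cdot\overline{e}=(x\cdot\overline{e})\ast\overline{e}$ for all $x\in Q$.
   Context: A magma $(Q,\cdot)$ is right modular if $(xy)z=(zy)x$ for all $x,y,z\in Q$. An element $l$ is a left unit of a magma if $lx=x$ for all $x$. A mapping $\alpha:Q\to Q$ is involutive if $\alpha\circ\alpha$ is the identity map of $Q$. *)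

(* Defs.v *)
Definition right_modular {Q : Type} (m : Q -> Q -> Q) : Prop :=
  forall x y z, m (m x y) z = m (m z y) x.
Definition left_unit {Q : Type} (m : Q -> Q -> Q) (l : Q) : Prop :=
  forall x, m l x = x.
Definition involutive_map {Q : Type} (a : Q -> Q) : Prop :=
  forall x, a (a x) = x.
Definition magma_automorphism {Q : Type} (m : Q -> Q -> Q) (a : Q -> Q) : Prop :=
  (forall x y, a (m x y) = m (a x) (a y)) /\
  (exists b : Q -> Q, (forall x, b (a x) = x) /\ (forall x, a (b x) = x)).
Definition double_magma {Q : Type} (dot ast : Q -> Q -> Q) : Prop :=
  forall x y z w, ast (dot x y) (dot z w) = dot (ast x z) (ast y w).

(* Main.v *)
Require Import Defs.
From Stdlib Require Import Setoid.

Section Aux.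
Variable Q : Type.
Variable m : Q -> Q -> Q.
Variable u : Q.
Hypothesis Hm : right_modular m.
Hypothesis Hu : left_unit m u.

Lemma rm_D3 x : m (m x u) u = x.
Proof. rewrite Hm, Hu, Hu. reflexivity. Qed.

Lemma rm_medial x y z w : m (m x y) (m z w) = m (m x z) (m y w).
Proof. rewrite Hm. rewrite (Hm z w y). rewrite Hm. reflexivity. Qed.

Lemma rm_D2 x y : m x y = m (m y x) u.
Proof. rewrite <- (Hu x) at 1. rewrite Hm. reflexivity. Qed.

Lemma rm_unit_uniq c : left_unit m c -> c = u.
Proof. intro Hc. rewrite <- (rm_D3 c). rewrite Hc, Hu. reflexivity. Qed.
End Aux.

Theorem theorem5p1 (Q : Type) (dot ast : Q -> Q -> Q) (e ebar : Q)
  (Hdot : right_modular dot) (Hast : right_modular ast)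
  (He : left_unit dot e) (Hebar : left_unit ast ebar) :
  (double_magma dot ast <->
     exists alpha : Q -> Q, magma_automorphism ast alpha /\ involutive_map alpha /\
       forall x y, ast x y = dot (alpha x) y)
  /\
  (double_magma dot ast ->
     forall alpha : Q -> Q, magma_automorphism ast alpha -> involutive_map alpha ->
       (forall x y, ast x y = dot (alpha x) y) ->
       forall x, alpha x = dot (ast x ebar) ebar /\ alpha x = ast (dot x ebar) ebar).
Proof.
  assert (Hdh : forall alpha : Q -> Q, magma_automorphism ast alpha -> involutive_map alpha ->
       (forall x y, ast x y = dot (alpha x) y) -> forall x y, alpha (dot x y) = dot (alpha x) (alpha y)).
  { intros alpha [Hh _] Hi Hr x y.
    rewrite <- (Hi x) at 1. rewrite <- Hr, Hh, Hr, Hi. reflexivity. }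
  split.
  - split.
    + intro I; unfold double_magma in I.
      assert (Hee : ast e e = e).
      { apply (rm_unit_uniq _ _ _ Hdot He). intro t.
        rewrite <- (Hebar t) at 1. rewrite <- I. rewrite !He. apply Hebar. }
      assert (Hdd : dot ebar ebar = ebar).
      { apply (rm_unit_uniq _ _ _ Hast Hebar). intro w.
        transitivity (ast (dot ebar ebar) (dot e w)); [rewrite He; reflexivity|].
        rewrite I, Hebar, He. apply Hebar. }
      assert (Hey : forall y w, ast (dot ebar y) w = ast y w).
      { intros y w.
        transitivity (ast (dot ebar y) (dot e w)); [rewrite He; reflexivity|].
        rewrite I, Hebar, He. reflexivity. }
      assert (Heq : forall x, dot (ast x ebar) ebar = ast (dot x ebar) ebar).
      { intro x. transitivity (ast (dot x ebar) (dot ebar ebar)).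
        - rewrite I, Hebar. reflexivity.
        - rewrite Hdd. reflexivity. }
      exists (fun x => ast (dot x ebar) ebar).
      assert (Hinv : involutive_map (fun x => ast (dot x ebar) ebar)).
      { intro x. simpl. rewrite <- (Heq x). rewrite Hdot, Hdd, Hey.
        apply (rm_D3 _ _ _ Hast Hebar). }
      split; [split|split].
      * intros x y.
        assert (dot (ast x y) ebar = ast (dot x ebar) (dot y ebar)).
        { transitivity (dot (ast x y) (ast ebar ebar)); [rewrite Hebar; reflexivity|].
          rewrite <- I. reflexivity. }
        rewrite H.
        rewrite <- (rm_medial _ _ Hast), (Hebar ebar). reflexivity.
      * exists (fun x => ast (dot x ebar) ebar). split; apply Hinv.
      * exact Hinv.
      * intros x y. symmetry.
        transitivity (dot (ast (dot x ebar) ebar) (ast ebar y)); [rewrite Hebar; reflexivity|].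
        rewrite <- I. rewrite Hdot, Hdd, Hey. symmetry.
        rewrite (rm_D2 _ _ _ Hast Hebar x (dot ebar y)). rewrite Hey.
        rewrite <- (rm_D2 _ _ _ Hast Hebar). reflexivity.
    + intros [alpha [Ha [Hi Hr]]] x y z w.
      rewrite !Hr. rewrite (Hdh alpha Ha Hi Hr).
      apply (rm_medial _ _ Hdot).
  - intros I alpha Ha Hi Hr x; unfold double_magma in I.
    assert (Hae : alpha ebar = e).
    { apply (rm_unit_uniq _ _ _ Hdot He). intro t. rewrite <- Hr. apply Hebar. }
    assert (Hlu : forall t, dot ebar t = t).
    { intro t. transitivity (dot (alpha e) (alpha (alpha t))).
      + rewrite <- Hae, !Hi. reflexivity.
      + rewrite <- (Hdh alpha Ha Hi Hr), He, Hi. reflexivity. }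
    assert (H1 : alpha x = dot (ast x ebar) ebar).
    { rewrite Hr, Hdot, !Hlu. reflexivity. }
    split; [exact H1|].
    rewrite H1. transitivity (ast (dot x ebar) (dot ebar ebar)).
    + rewrite I, Hebar. reflexivity.
    + rewrite Hlu. reflexivity.
Qed.
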